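(* Let $X$ be a real Hilbert space, let $\rho>-1$ and let $A\colon X\rightrightarrows X$ be maximally $\rho$-comonotone. Then $\operatorname{ran}(\mathrm{Id}+A^{-1})=X$.
   Context: For $A\colon X\rightrightarrows X$, $A^{-1}$ is defined by $\operatorname{gra}A^{-1}=\{(u,x):(x,u)\in\operatorname{gra}A\}$. For $\rho\in\mathbb R$, $A$ is $\rho$-comonotone if $\langle x-y,u-v\rangle\ge\rho\|u-v\|^2$ for all $(x,u),(y,v)\in\operatorname{gra}A$; maximally $\rho$-comonotone if moreover no $\rho$-comonotone operator has a graph properly containing $\operatorname{gra}A$. *)

(* Defs.v *)
From HB Require Import structures.
From mathcomp Require Import all_boot all_order all_algebra.
From mathcomp Require Import all_classical all_reals all_analysis.
Set Implicit Arguments. Unset Strict Implicit. Unset Printing Implicit Defensive.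
Import Order.TTheory GRing.Theory Num.Theory.
Import numFieldNormedType.Exports.
Local Open Scope classical_set_scope.
Local Open Scope ring_scope.

(* A real Hilbert space is modelled as a complete normed space X over a
   realType R together with an inner product ip inducing the norm. *)
Definition is_inner_product (R : realType) (X : normedModType R)
  (ip : X -> X -> R) : Prop :=
  [/\ (forall x y, ip x y = ip y x),
      (forall (a : R) (x y z : X), ip (a *: x + y) z = a * ip x z + ip y z)
    & (forall x, ip x x = `|x| ^+ 2)].

Definition setop (X : Type) := X -> set X.

Definition gra (X : Type) (A : setop X) : set (X * X) :=
  [set p | A p.1 p.2].

Definition opinv (X : Type) (A : setop X) : setop X :=
  fun u => [set x | A x u].

Definition opId (X : Type) : setop X := fun x => [set x].

Definition opadd (R : realType) (X : normedModType R) (A B : setop X) : setop X :=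
  fun x => [set a + b | a in A x & b in B x].

Definition ran (X : Type) (A : setop X) : set X :=
  [set u | exists x, A x u].

Definition comonotone (R : realType) (X : normedModType R)
  (ip : X -> X -> R) (rho : R) (A : setop X) : Prop :=
  forall x u y v, A x u -> A y v -> rho * `|u - v| ^+ 2 <= ip (x - y) (u - v).

Definition max_comonotone (R : realType) (X : normedModType R)
  (ip : X -> X -> R) (rho : R) (A : setop X) : Prop :=
  comonotone ip rho A /\
  ~ (exists B : setop X, comonotone ip rho B /\ gra A `<` gra B).

(* Main.v *)
Require Import Defs.
From HB Require Import structures.
From mathcomp Require Import all_boot all_order all_algebra.
From mathcomp Require Import all_classical all_reals all_analysis.
From mathcomp Require Import ring lra.
Import Order.TTheory GRing.Theory Num.Theory.
Import numFieldNormedType.Exports.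
Local Open Scope classical_set_scope.
Local Open Scope ring_scope.
Set Implicit Arguments. Unset Strict Implicit.

Section IP.
Variables (R : realType) (X : completeNormedModType R) (ip : X -> X -> R).
Hypothesis hip : is_inner_product ip.

Lemma ipC x y : ip x y = ip y x.
Proof. by case: hip. Qed.
Lemma ipxx x : ip x x = `|x| ^+ 2.
Proof. by case: hip. Qed.
Lemma ip_lin a x y z : ip (a *: x + y) z = a * ip x z + ip y z.
Proof. by case: hip. Qed.
Lemma ip0l z : ip 0 z = 0.
Proof.
have := ip_lin 1 0 0 z; rewrite scale1r addr0 mul1r; lra.
Qed.
Lemma ipDl x y z : ip (x + y) z = ip x z + ip y z.
Proof. by have := ip_lin 1 x y z; rewrite scale1r mul1r. Qed.
Lemma ipZl a x z : ip (a *: x) z = a * ip x z.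
Proof. by rewrite -[a *: x]addr0 ip_lin ip0l addr0. Qed.
Lemma ipNl x z : ip (- x) z = - ip x z.
Proof. by rewrite -scaleN1r ipZl mulN1r. Qed.
Lemma ipBl x y z : ip (x - y) z = ip x z - ip y z.
Proof. by rewrite ipDl ipNl. Qed.
Lemma ip0r z : ip z 0 = 0.
Proof. by rewrite ipC ip0l. Qed.
Lemma ipDr x y z : ip z (x + y) = ip z x + ip z y.
Proof. by rewrite ipC ipDl !(ipC z). Qed.
Lemma ipZr a x z : ip z (a *: x) = a * ip z x.
Proof. by rewrite ipC ipZl ipC. Qed.
Lemma ipNr x z : ip z (- x) = - ip z x.
Proof. by rewrite ipC ipNl ipC. Qed.
Lemma ipBr x y z : ip z (x - y) = ip z x - ip z y.
Proof. by rewrite ipDr ipNr. Qed.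
Lemma ip_ge0 x : 0 <= ip x x.
Proof. by rewrite ipxx sqr_ge0. Qed.

Lemma ip_CS x y : ip x y <= `|x| * `|y|.
Proof.
have [->|x0] := eqVneq x 0; first by rewrite ip0l normr0 mul0r.
have [->|y0] := eqVneq y 0; first by rewrite ip0r normr0 mulr0.
have hx : 0 < `|x| by rewrite normr_gt0.
have hy : 0 < `|y| by rewrite normr_gt0.
have H := ip_ge0 (`|y| *: x - `|x| *: y).
rewrite !(ipBl, ipBr, ipZl, ipZr) !ipxx (ipC y x) in H.
have hxy : 0 < `|x| * `|y| by rewrite mulr_gt0.
nra.
Qed.

Ltac ipexp := rewrite ?(ipBl, ipBr, ipDl, ipDr, ipZl, ipZr, ipNl, ipNr, ip0l, ip0r).

Variable G : set (X * X).
Hypothesis Gmono : forall a1 b1 a2 b2, G (a1, b1) -> G (a2, b2) ->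
  0 <= ip (a1 - a2) (b1 - b2).

Inductive ws : R -> X -> X -> R -> Prop :=
| ws0 : ws 0 0 0 0
| wsadd L A B K mu a b : ws L A B K -> 0 <= mu -> G (a, b) ->
    ws (L + mu) (A + mu *: a) (B + mu *: b) (K + mu * ip a b).

Lemma ws_ge0 L A B K : ws L A B K -> 0 <= L.
Proof. by elim=> // L' A' B' K' mu a b _ IH mu0 _; rewrite addr_ge0. Qed.

Lemma ws_lin L A B K : ws L A B K -> forall a b, G (a, b) ->
  ip A b + ip a B <= K + L * ip a b.
Proof.
elim=> [a b _|L' A' B' K' mu a' b' _ IH mu0 Gab' a b Gab].
  by ipexp; rewrite mul0r !addr0.
have := IH a b Gab; have := Gmono Gab' Gab; ipexp.
move=> h1 h2; have s1 := ipC a' b; have s2 := ipC b' a; have s3 := ipC a b'; have s4 := ipC b a'.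
have h3 := mulr_ge0 mu0 h1.
lra.
Qed.

Lemma ws_quad L A B K : ws L A B K -> ip A B <= L * K.
Proof.
elim=> [|L' A' B' K' mu a b w IH mu0 Gab]; first by ipexp; rewrite mul0r.
have h := ws_lin w Gab.
have h3 : mu * (ip A' b + ip a B') <= mu * (K' + L' * ip a b) by rewrite ler_wpM2l.
ipexp; lra.
Qed.

Lemma ws_scale L A B K c : ws L A B K -> 0 <= c ->
  ws (c * L) (c *: A) (c *: B) (c * K).
Proof.
move=> w c0; elim: w => [|L' A' B' K' mu a b _ IH mu0 Gab].
  by rewrite mulr0 !scaler0; exact: ws0.
rewrite mulrDr !scalerDr mulrDr !scalerA mulrA.
by apply: wsadd => //; rewrite mulr_ge0.
Qed.

Lemma ws_add L1 A1 B1 K1 L2 A2 B2 K2 : ws L1 A1 B1 K1 -> ws L2 A2 B2 K2 ->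
  ws (L1 + L2) (A1 + A2) (B1 + B2) (K1 + K2).
Proof.
move=> w1; elim=> [|L' A' B' K' mu a b _ IH mu0 Gab]; first by rewrite !addr0.
by rewrite !addrA; apply: wsadd.
Qed.

Lemma ws_point a b : G (a, b) -> ws 1 a b (ip a b).
Proof.
move=> Gab; have := @wsadd 0 0 0 0 1 a b ws0 ler01 Gab.
by rewrite !add0r !scale1r mul1r.
Qed.


Definition psi A B K := - K - ip (B - A) (B - A) / 4.

Lemma ws_eqL L L' A B K : ws L A B K -> L = L' -> ws L' A B K.
Proof. by move=> w <-. Qed.

Lemma psi_le0 A B K : ws 1 A B K -> psi A B K <= 0.
Proof.
move=> w; have h1 := ws_quad w; have h2 := ip_ge0 (A + B).
move: h1 h2; rewrite /psi; ipexp; rewrite ?(ipC B A) => h1 h2; lra.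
Qed.

Lemma ws_mid A1 B1 K1 A2 B2 K2 : ws 1 A1 B1 K1 -> ws 1 A2 B2 K2 ->
  ws 1 (2^-1 *: A1 + 2^-1 *: A2) (2^-1 *: B1 + 2^-1 *: B2) (2^-1 * K1 + 2^-1 * K2).
Proof.
move=> w1 w2; have h : (0:R) <= 2^-1 by rewrite invr_ge0 ler0n.
apply: ws_eqL (ws_add (ws_scale w1 h) (ws_scale w2 h)) _; lra.
Qed.

Lemma mid_ineq A1 B1 K1 A2 B2 K2 S :
  psi (2^-1 *: A1 + 2^-1 *: A2) (2^-1 *: B1 + 2^-1 *: B2) (2^-1 * K1 + 2^-1 * K2) <= S ->
  ip (2^-1 *: (A1 - B1) - 2^-1 *: (A2 - B2)) (2^-1 *: (A1 - B1) - 2^-1 *: (A2 - B2))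
   <= 4 * S - 2 * psi A1 B1 K1 - 2 * psi A2 B2 K2.
Proof.
rewrite /psi; ipexp.
rewrite ?(ipC B1 A1) ?(ipC A2 A1) ?(ipC B2 A1) ?(ipC A2 B1) ?(ipC B2 B1) ?(ipC B2 A2).
lra.
Qed.

Lemma ws_dir A B K a b t : ws 1 A B K -> G (a, b) -> 0 <= t <= 1 ->
  ws 1 ((1 - t) *: A + t *: a) ((1 - t) *: B + t *: b) ((1 - t) * K + t * ip a b).
Proof.
move=> w Gab /andP[t0 t1]; have h : 0 <= 1 - t by lra.
apply: ws_eqL (wsadd (ws_scale w h) t0 Gab) _; lra.
Qed.

Lemma dir_id A B K a b t :
  psi ((1 - t) *: A + t *: a) ((1 - t) *: B + t *: b) ((1 - t) * K + t * ip a b) - psi A B K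
  = t * (ip (2^-1 *: (A - B) - a) (2^-1 *: (A - B) + b) - psi A B K) -
    t ^+ 2 * ip (2^-1 *: (A - B) + 2^-1 *: (b - a)) (2^-1 *: (A - B) + 2^-1 *: (b - a)).
Proof.
rewrite /psi; ipexp.
rewrite ?(ipC B A) ?(ipC a A) ?(ipC b A) ?(ipC a B) ?(ipC b B) ?(ipC b a).
field.
by [].
Qed.

Lemma dir_ineq A B K a b t S :
  psi ((1 - t) *: A + t *: a) ((1 - t) *: B + t *: b) ((1 - t) * K + t * ip a b) <= S ->
  psi A B K <= 0 -> 0 <= t ->
  t * ip (2^-1 *: (A - B) - a) (2^-1 *: (A - B) + b) <=
    (S - psi A B K) + t ^+ 2 * ip (2^-1 *: (A - B) + 2^-1 *: (b - a)) (2^-1 *: (A - B) + 2^-1 *: (b - a)).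
Proof.
move=> h1 h2 t0; have e := dir_id A B K a b t.
have h3 : t * psi A B K <= 0 by rewrite mulr_ge0_le0.
move: e h1 h2 h3.
set P1 := psi _ _ _; set P0 := psi A B K; set H := ip _ _; set Q := ip _ _.
move=> e h1 h2 h3.
have : t * (H - P0) = t * H - t * P0 by rewrite mulrBr.
lra.
Qed.


Lemma en_lt (x : R) : 0 < x -> ((Num.truncn (x^-1)).+1%:R : R)^-1 < x.
Proof.
move=> x0; rewrite -[X in _ < X]invrK ltf_pV2 ?posrE ?invr_gt0 ?ltr0Sn //.
exact: truncnS_gt.
Qed.

Lemma en_le (n m : nat) : (n <= m)%N -> (m.+1%:R : R)^-1 <= (n.+1%:R)^-1.
Proof. by move=> nm; rewrite lef_pV2 ?posrE ?ltr0Sn // ler_nat ltnS. Qed.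

Lemma par_ineq u v w : ip (u + w) (u + w) <= 2 * ip (v + w) (v + w) + 2 * ip (v - u) (v - u).
Proof.
have := ip_ge0 (v + w + (v - u)); ipexp.
rewrite ?(ipC v u) ?(ipC w u) ?(ipC w v); lra.
Qed.

Lemma shift_ineq p x a b : ip (p - a) (p + b) <= ip (x - a) (x + b) + ip (p - x) ((p + b) + (p - a)).
Proof.
have := ip_ge0 (p - x); ipexp.
rewrite ?(ipC x p) ?(ipC a p) ?(ipC b p) ?(ipC a x) ?(ipC b x) ?(ipC b a); lra.
Qed.

Lemma MDF : exists p, forall a b, G (a, b) -> ip (p - a) (p + b) <= 0.
Proof.
have [[[a0 b0] G0]|nG] := pselect (exists g, G g); last first.
  by exists 0 => a b Gab; exfalso; apply: nG; exists (a, b).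
pose E := [set r | exists A B K, ws 1 A B K /\ r = psi A B K].
have hs : has_sup E.
  split; first by exists (psi a0 b0 (ip a0 b0)), a0, b0, (ip a0 b0); split=> //; exact: ws_point.
  by exists 0 => r [A [B [K [w ->]]]]; exact: psi_le0.
pose S := sup E.
have SE : forall A B K, ws 1 A B K -> psi A B K <= S.
  by move=> A B K w; apply: sup_upper_bound => //; exists A, B, K.
have approx : forall n : nat, exists T : X * X * R,
    ws 1 T.1.1 T.1.2 T.2 /\ S - (n.+1%:R)^-1 < psi T.1.1 T.1.2 T.2.
  move=> n; have e0 : 0 < (n.+1%:R : R)^-1 by rewrite invr_gt0 ltr0Sn.
  have [r [A [B [K [w ->]]]] hr] := sup_adherent e0 hs.
  by exists (A, B, K).
have /choice [f hf] := approx.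
pose P n := 2^-1 *: ((f n).1.1 - (f n).1.2).
have Pcau : forall n m, ip (P n - P m) (P n - P m) <
    2 * (n.+1%:R)^-1 + 2 * (m.+1%:R)^-1.
  move=> n m; have [wn hn] := hf n; have [wm hm] := hf m.
  have h : ip (P n - P m) (P n - P m) <= _ := mid_ineq (SE _ _ _ (ws_mid wn wm)).
  move: h hn hm; set x := ip _ _; set p1 := psi _ _ _; set p2 := psi _ _ _; set e1 := (n.+1%:R)^-1; set e2 := (m.+1%:R)^-1; lra.
have cP : cauchy (P @ \oo).
  apply/cauchy_exP => eps eps0.
  have e4 : 0 < eps ^+ 2 / 4 by rewrite divr_gt0 // exprn_gt0.
  pose N := Num.truncn ((eps ^+ 2 / 4)^-1).
  have hN := en_lt e4.
  exists (P N); exists N => // n /= hNn.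
  rewrite -ball_normE /ball_ /=.
  have h1 := Pcau N n.
  have h2 := en_le hNn.
  have h3 := ipxx (P N - P n).
  have h4 : 0 <= `|P N - P n| by [].
  rewrite -/N in hN.
  move: h1 h2 h3 h4 hN; set y := `|_|; set x := ip _ _; set e1 := (N.+1%:R)^-1;
    set e2 := (n.+1%:R)^-1; set E2 := eps ^+ 2 => h1 h2 h3 h4 hN.
  have hy : y ^+ 2 < E2 by lra.
  rewrite /E2 in hy; nra.
have /cauchy_cvgP cv := cP.
pose p := lim (P @ \oo).
exists p => a b Gab.
apply/ler_addgt0Pr => eps eps0; rewrite add0r.
pose q := 2^-1 *: (b - a).
pose c := (p + b) + (p - a).
pose M := 2 * ip (p + q) (p + q) + 2.
have M0 : 0 < M by have := ip_ge0 (p + q); rewrite /M; lra.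
pose t := eps / (3 * M + eps).
have tden : 0 < 3 * M + eps by lra.
have tt : t * (3 * M + eps) = eps by rewrite /t mulfVK // gt_eqF.
have t0 : 0 < t by rewrite divr_gt0.
have t1 : t <= 1 by move: tt; set u := t; nra.
have tM : t * M <= eps / 3 by move: tt; set u := t; nra.
pose del := eps / (3 * `|c| + 3 + eps).
have dden : 0 < 3 * `|c| + 3 + eps by have := normr_ge0 c; lra.
have dd : del * (3 * `|c| + 3 + eps) = eps by rewrite /del mulfVK // gt_eqF.
have d0 : 0 < del by rewrite divr_gt0.
have d1 : del <= 1 by move: dd; have := normr_ge0 c; set u := del; set v := `|c|; nra.
have dc : del * `|c| <= eps / 3 by move: dd; have := normr_ge0 c; set u := del; set v := `|c|; nra.
have [N1 _ hN1] := cvgr_dist_lt P p cv _ d0.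
have te : 0 < t * eps / 3 by rewrite divr_gt0 // mulr_gt0.
pose N2 := Num.truncn ((t * eps / 3)^-1).
have hN2 := en_lt te.
pose n := maxn N1 N2.
have hd : `|p - P n| < del by apply: hN1; rewrite /= leq_maxl.
have hen : (n.+1%:R : R)^-1 <= (N2.+1%:R)^-1 by apply: en_le; rewrite leq_maxr.
have [wn hn] := hf n.
have t01 : 0 <= t <= 1 by rewrite t1 ltW.
have hdir := dir_ineq (SE _ _ _ (ws_dir wn Gab t01)) (psi_le0 wn) (ltW t0).
have hdir' : t * ip (P n - a) (P n + b) <= S - psi (f n).1.1 (f n).1.2 (f n).2 +
    t ^+ 2 * ip (P n + q) (P n + q) := hdir.
have hQ := par_ineq (P n) p q.
have hh := shift_ineq p (P n) a b.
have hD := ipxx (p - P n).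
have hcs := ip_CS (p - P n) c.
have hY := normr_ge0 (p - P n).
have hC := normr_ge0 c.
have hYC : `|p - P n| * `|c| <= del * `|c| by rewrite ler_wpM2r // ltW.
rewrite -/c in hh.
move: hdir' hQ hh hD hcs hY hC hYC hd hn hen hN2.
rewrite -/N2 -/M.
set H := ip (P n - a) _; set Q := ip (P n + q) _; set D := ip (p - P n) (p - P n).
set Z := ip (p - P n) c; set Y := `|p - P n|; set C := `|c|; set ps := psi _ _ _.
set en := (n.+1%:R)^-1; set e2 := (N2.+1%:R)^-1; set h := ip (p - a) _.
move=> hdir' hQ hh hD hcs hY hC hYC hd hn hen hN2.
have hDl : D <= 1 by rewrite hD; nra.
have hQM : Q <= M by rewrite /M; lra.
have h1 : t * H < t * (eps / 3) + t ^+ 2 * Q by lra.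
have h2a := ler_wpM2l (ltW t0) tM.
have h2b : t ^+ 2 * Q <= t ^+ 2 * M by rewrite ler_wpM2l // exprn_ge0 // ltW.
have h2c : t ^+ 2 * M = t * (t * M) by rewrite expr2 mulrA.
have h3 : t * H < t * (2 * eps / 3) by lra.
rewrite ltr_pM2l // in h3.
have dc' : del * C <= eps / 3 := dc.
move: dc' hYC hd; clearbody del => dc' hYC hd.
lra.
Qed.

End IP.

Ltac ipexp2 h := rewrite ?(ipBl h, ipBr h, ipDl h, ipDr h, ipZl h, ipZr h, ipNl h, ipNr h, ip0l h, ip0r h).

Unset Implicit Arguments. Set Strict Implicit.

Theorem proposition2p9 (R : realType) (X : completeNormedModType R)
  (ip : X -> X -> R) (rho : R) (A : setop X) :
  is_inner_product ip -> -1 < rho -> max_comonotone ip rho A ->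
  ran (opadd (@opId X) (opinv A)) = setT.
Proof.
move=> hip hrho [hcom hmax].
apply/seteqP; split=> // z _.
pose s := 1 + rho.
have s0 : 0 < s by rewrite /s; lra.
pose G := [set g : X * X | exists y v, A y v /\ g = (s *: v, y - rho *: v - z)].
have Gmono : forall a1 b1 a2 b2, G (a1, b1) -> G (a2, b2) ->
    0 <= ip (a1 - a2) (b1 - b2).
  move=> a1 b1 a2 b2 [y1 [v1 [A1 [-> ->]]]] [y2 [v2 [A2 [-> ->]]]].
  have := hcom _ _ _ _ A1 A2; rewrite -(ipxx hip).
  rewrite -subr_ge0 => /(mulr_ge0 (ltW s0)).
  rewrite /s; ipexp2 hip.
  rewrite ?(ipC hip y1 v1) ?(ipC hip y2 v1) ?(ipC hip y1 v2) ?(ipC hip y2 v2) ?(ipC hip v2 v1) ?(ipC hip z v1) ?(ipC hip z v2).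
  move=> h; nra.
have [p hp] := MDF hip Gmono.
pose u := s^-1 *: p.
pose x := z - u.
have ep : p = s *: u by rewrite /u scalerA mulfV ?gt_eqF // scale1r.
clearbody u; subst p.
have key : forall y v, A y v -> rho * `|u - v| ^+ 2 <= ip (x - y) (u - v).
  move=> y v Ayv.
  have := hp _ _ (ex_intro _ y (ex_intro _ v (conj Ayv erefl))).
  have -> : ip (s *: u - s *: v) (s *: u + (y - rho *: v - z)) =
     s * (rho * ip (u - v) (u - v) - ip (x - y) (u - v)).
    rewrite /x /s; ipexp2 hip.
    rewrite ?(ipC hip v u) ?(ipC hip y u) ?(ipC hip z u) ?(ipC hip y v) ?(ipC hip z v) ?(ipC hip z y).
    ring.
  rewrite pmulr_rle0 // subr_le0 (ipxx hip) //.
have Axu : A x u.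
  apply: contrapT => nA; apply: hmax.
  exists (fun x' => [set u' | A x' u' \/ (x' = x /\ u' = u)]).
  split.
    move=> x1 u1 x2 u2 [h1|[-> ->]] [h2|[-> ->]].
    - exact: hcom.
    - have h := key _ _ h1.
      by rewrite (distrC u1 u) -(opprB x x1) -(opprB u u1) (ipNl hip) (ipNr hip) opprK.
    - exact: key.
    - by rewrite !subrr (ip0l hip) normr0 expr0n mulr0.
  split.
    by move=> [x1 u1] /= h; left.
  move=> sub; apply: nA; have := sub (x, u); apply; by right.
exists u; exists u => //; exists x => //.
by rewrite /x addrC subrK.
Qed.
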